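(* Let $A\in\mathbb{C}^{d\times d}$ be Hermitian positive-definite and let $M\in\mathbb{R}^{d\times d}$ be diagonal with positive diagonal entries. Let $\lambda_0>0$ be the smallest eigenvalue of the generalized eigenvalue problem $Az=\lambda Mz$. For $\lambda>0$ consider the energy $e:\mathbb{C}^d\to\mathbb{R}$, $$e(z)=\tfrac12\langle Az,z\rangle+\tfrac{\lambda}{4}\langle Mu,u\rangle,\qquad u_i=1-|z_i|^2\ (i=1,\dots,d),$$ where $\langle x,y\rangle=\mathrm{Re}\,(x^\dagger y)$. If $0<\lambda\le\lambda_0$, then the only critical point of $e$ (viewing $\mathbb{C}^d\cong\mathbb{R}^{2d}$) is $z=0$.
   Context: $x^\dagger$ denotes the conjugate transpose. Critical points are points where the gradient of $e$ with respect to the real and imaginary parts of $z$ vanishes. *)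

(* Defs.v *)
From HB Require Import structures.
From mathcomp Require Import all_boot all_order all_algebra.
From mathcomp Require Import all_classical all_reals.
From mathcomp Require Import topology normedtype derive.
From mathcomp Require Import complex.
Set Implicit Arguments. Unset Strict Implicit. Unset Printing Implicit Defensive.
Import Order.TTheory GRing.Theory Num.Theory.
Local Open Scope ring_scope.

Section Defs.
Variable R : realType.
Variable d : nat.

Definition cadj m n (A : 'M[R[i]]_(m, n)) : 'M[R[i]]_(n, m) :=
  (map_mx (@conjc R) A)^T.

Definition cinner (x y : 'cV[R[i]]_d) : R := complex.Re ((cadj x *m y) 0 0).

Definition rinner (x y : 'cV[R]_d) : R := (x^T *m y) 0 0.

Definition hermitian_mx_c (A : 'M[R[i]]_d) : Prop := cadj A = A.

Definition posdef_c (A : 'M[R[i]]_d) : Prop :=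
  forall z : 'cV[R[i]]_d, z != 0 -> 0 < cinner z (A *m z).

Definition cmx (M : 'M[R]_d) : 'M[R[i]]_d := map_mx (fun x => x%:C%C) M.

Definition gen_eigenvalue (A : 'M[R[i]]_d) (M : 'M[R]_d) (mu : R[i]) : Prop :=
  exists z : 'cV[R[i]]_d, z != 0 /\ A *m z = mu *: (cmx M *m z).

Definition csqnorm (c : R[i]) : R := complex.Re c ^+ 2 + complex.Im c ^+ 2.

Definition energy (A : 'M[R[i]]_d) (M : 'M[R]_d) (lam : R)
    (z : 'cV[R[i]]_d) : R :=
  let u : 'cV[R]_d := \col_i (1 - csqnorm (z i 0)) in
  2^-1 * cinner (A *m z) z + lam / 4 * rinner (M *m u) u.

(* z is a critical point of f : C^d -> R, viewing C^d = R^(2d): all partial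
   derivatives w.r.t. Re z_j and Im z_j exist and vanish. *)
Definition critical_point (f : 'cV[R[i]]_d -> R) (z : 'cV[R[i]]_d) : Prop :=
  forall j : 'I_d,
    is_derive (0 : R^o) (1 : R^o)
      (fun t : R^o => (f (z + (Complex t 0) *: delta_mx j 0) : R^o)) (0 : R^o) /\
    is_derive (0 : R^o) (1 : R^o)
      (fun t : R^o => (f (z + (Complex 0 t) *: delta_mx j 0) : R^o)) (0 : R^o).

End Defs.

(* Main.v *)
Require Import Defs.
From HB Require Import structures.
From mathcomp Require Import all_boot all_order all_algebra.
From mathcomp Require Import all_classical all_reals.
From mathcomp Require Import topology normedtype derive.
From mathcomp Require Import complex.
From mathcomp Require Import ring lra.
Import Order.TTheory GRing.Theory Num.Theory.
Set Implicit Arguments. Unset Strict Implicit.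
Local Open Scope ring_scope.

Section S. Variable R : realType.
Local Notation C := (R[i]).
Variable d : nat.

Lemma Re_sum (I : Type) (r : seq I) (P : pred I) (F : I -> C) :
  complex.Re (\sum_(i <- r | P i) F i) = \sum_(i <- r | P i) complex.Re (F i).
Proof.
elim/big_rec2: _ => //= i y1 y2 _ <-; rewrite /GRing.add /=.
by case: (F i) => a b; case: y2 => c e.
Qed.

Lemma cinnerE (x y : 'cV[C]_d) :
  cinner x y = \sum_k complex.Re (conjc (x k 0) * y k 0).
Proof. by rewrite /cinner /cadj !mxE Re_sum; apply: eq_bigr => k _; rewrite !mxE. Qed.

Lemma rinnerE (x y : 'cV[R]_d) : rinner x y = \sum_k x k 0 * y k 0.
Proof. by rewrite /rinner !mxE; apply: eq_bigr => k _; rewrite !mxE. Qed.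

Lemma diag_rinner (M : 'M[R]_d) (v : 'cV[R]_d) : is_diag_mx M ->
  rinner (M *m v) v = \sum_k M k k * (v k 0 * v k 0).
Proof.
move=> /is_diag_mxP dM; rewrite rinnerE; apply: eq_bigr => k _.
rewrite !mxE (bigD1 k) //= big1 ?addr0 ?mulrA // => l lk.
by rewrite dM ?mul0r // eq_sym.
Qed.
Definition bb (z w : 'cV[C]_d) k :=
  2 * (complex.Re (z k 0) * complex.Re (w k 0) + complex.Im (z k 0) * complex.Im (w k 0)).

Lemma Re_quad (a b c e : C) (t : R) :
  complex.Re (conjc (c + t%:C%C * e) * (a + t%:C%C * b)) =
  complex.Re (conjc c * a) + t * (complex.Re (conjc c * b) + complex.Re (conjc e * a))
  + t * t * complex.Re (conjc e * b).
Proof. case: a => ? ?; case: b => ? ?; case: c => ? ?; case: e => ? ? /=; ring. Qed.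

Lemma energy_line (A : 'M[C]_d) (M : 'M[R]_d) lam z w (t : R) : is_diag_mx M ->
  energy A M lam (z + t%:C%C *: w) =
  2^-1 * (cinner (A *m z) z + t * (cinner (A *m z) w + cinner (A *m w) z)
          + t * t * cinner (A *m w) w)
  + lam / 4 * \sum_k M k k * ((1 - csqnorm (z k 0) - t * bb z w k - t * t * csqnorm (w k 0))
                             * (1 - csqnorm (z k 0) - t * bb z w k - t * t * csqnorm (w k 0))).
Proof.
move=> dM; rewrite /energy diag_rinner //; congr (_ * _ + _ * _).
  rewrite !cinnerE mulmxDr -scalemxAr.
  rewrite !mulr_sumr -!big_split /= !mulr_sumr -!big_split /=; apply: eq_bigr => k _.
  have E (X Y : 'cV[C]_d) (s : C) : (X + s *: Y) k 0 = X k 0 + s * Y k 0 by rewrite !mxE.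
  by rewrite !E Re_quad.
apply: eq_bigr => k _; rewrite !mxE /bb /csqnorm.
case: (z k 0) => a1 a2; case: (w k 0) => b1 b2 /=; ring.
Qed.

Lemma energy_derive (A : 'M[C]_d) (M : 'M[R]_d) lam z w : is_diag_mx M ->
  is_derive (0 : R^o) (1 : R^o)
    (fun t : R^o => (energy A M lam (z + (Complex t 0) *: w) : R^o))
    (2^-1 * (cinner (A *m z) w + cinner (A *m w) z)
     + lam / 4 * \sum_k M k k * (2 * (1 - csqnorm (z k 0)) * (- bb z w k))).
Proof.
move=> dM.
pose Q k : {poly R} := (1 - csqnorm (z k 0))%:P - (bb z w k)%:P * 'X
   - (csqnorm (w k 0))%:P * 'X^2.
pose P : {poly R} := (2^-1)%:P * ((cinner (A *m z) z)%:P
   + (cinner (A *m z) w + cinner (A *m w) z)%:P * 'X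
   + (cinner (A *m w) w)%:P * 'X^2)
   + (lam / 4)%:P * \sum_k (M k k)%:P * (Q k * Q k).
have -> : (fun t : R^o => (energy A M lam (z + (Complex t 0) *: w) : R^o)) = horner P.
  apply/funext => t; rewrite energy_line // /P.
  rewrite !(hornerD, hornerM, hornerC, hornerX, hornerXn) horner_sum.
  congr (_ * _ + _ * _); first by ring.
  apply: eq_bigr => k _.
  by rewrite /Q !(hornerD, hornerM, hornerC, hornerX, hornerXn, hornerN); ring.
apply: is_derive_eq; rewrite /P.
rewrite !(derivD, derivM, derivC, derivX, derivXn) raddf_sum /= !(mul0r, add0r).
rewrite !(hornerD, hornerM, hornerC, hornerX, hornerXn, hornerN) horner_sum.
rewrite (eq_bigr (fun k => M k k * (2 * (1 - csqnorm (z k 0)) * - bb z w k))); last first.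
  move=> k _; rewrite /Q !(derivD, derivB, derivN, derivM, derivC, derivX, derivXn).
  rewrite !(hornerD, hornerM, hornerC, hornerX, hornerXn, hornerN); ring.
ring.
Qed.
End S.

Section Ray.
Variable R : realType.
Local Notation C := (R[i]).
Variable d : nat.

Lemma cadjE m n (X : 'M[C]_(m, n)) : cadj X = (map_mx Num.conj X)^T.
Proof. by []. Qed.

Lemma cadj_mul m n p (X : 'M[C]_(m, n)) (Y : 'M[C]_(n, p)) :
  cadj (X *m Y) = cadj Y *m cadj X.
Proof. by rewrite !cadjE map_mxM trmx_mul. Qed.

Lemma cadjK m n (X : 'M[C]_(m, n)) : cadj (cadj X) = X.
Proof.
apply/matrixP => i j; rewrite !mxE.
by case: (X i j) => a b /=; rewrite opprK.
Qed.

Variables (A : 'M[C]_d) (M : 'M[R]_d) (lam0 : R).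
Hypotheses (hA : hermitian_mx_c A) (dM : is_diag_mx M) (Mpos : forall i, 0 < M i i)
  (hmin : forall mu : R, gen_eigenvalue A M (mu%:C)%C -> lam0 <= mu).

Let s j := Num.sqrt (M j j).
Let s_gt0 j : 0 < s j. Proof. by rewrite sqrtr_gt0. Qed.
Let s2 j : s j * s j = M j j.
Proof. by rewrite -expr2 sqr_sqrtr // ltW. Qed.

Let Dm : 'M[C]_d := diag_mx (\row_j ((s j)^-1)%:C%C).
Let Di : 'M[C]_d := diag_mx (\row_j (s j)%:C%C).

Lemma DmDi : Dm *m Di = 1%:M.
Proof.
rewrite /Dm /Di mulmx_diag; apply/matrixP => i j; rewrite !mxE.
case: eqP => [->|_]; last by rewrite !mulr0n.
rewrite !mulr1n /=; apply/eqP; rewrite eq_complex /= !mulr0 !mul0r subr0 addr0 eqxx andbT.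
by rewrite mulVf // gt_eqF.
Qed.

Lemma DiDm : Di *m Dm = 1%:M.
Proof. by rewrite /Dm /Di diag_mx_comm DmDi. Qed.

Lemma cmxE : cmx M = diag_mx (\row_j (M j j)%:C%C).
Proof.
apply/matrixP => i j; rewrite !mxE; case: eqP => [->|/eqP ij]; first by rewrite mulr1n.
by move/is_diag_mxP: dM => ->; rewrite // mulr0n.
Qed.

Lemma MDm : cmx M *m Dm = Di.
Proof.
rewrite cmxE /Dm /Di mulmx_diag; congr diag_mx; apply/matrixP => i j; rewrite !mxE /=.
apply/eqP; rewrite eq_complex /= !mulr0 !mul0r subr0 addr0 eqxx andbT.
by rewrite -s2 -mulrA mulfV ?mulr1 // gt_eqF.
Qed.

Lemma DmC : cadj Dm = Dm.
Proof.
apply/matrixP => i j; rewrite !mxE; case: eqP => [->|/eqP ij].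
  by rewrite eqxx !mulr1n /= oppr0.
by move: ij; rewrite eq_sym => /negbTE ->; rewrite !mulr0n /= oppr0.
Qed.

Let Cm := Dm *m A *m Dm.

Lemma Cm_herm : Cm \is hermsymmx.
Proof.
apply/is_hermitianmxP; rewrite expr0 scale1r.
have -> : map_mx Num.conj Cm^T = cadj Cm by rewrite cadjE map_trmx.
by rewrite /Cm !cadj_mul DmC hA mulmxA.
Qed.

Let P := spectralmx Cm.
Let sp := spectral_diag Cm.

Lemma Cm_eq : Cm = invmx P *m diag_mx sp *m P.
Proof. exact/orthomx_spectralP/hermitian_normalmx/Cm_herm. Qed.

Lemma Punit : P \in unitmx.
Proof. exact: spectral_unit. Qed.

Lemma invP : invmx P = cadj P.
Proof. by rewrite invmx_unitary ?spectral_unitarymx // cadjE map_trmx. Qed.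

Lemma sp_real k : ((complex.Re (sp 0 k))%:C)%C = sp 0 k.
Proof.
apply: RRe_real.
by have /mxOverP := hermitian_spectral_diag_real Cm_herm; apply.
Qed.

Lemma sp_ge k : lam0 <= complex.Re (sp 0 k).
Proof.
apply: hmin.
pose e : 'cV[C]_d := delta_mx k 0.
pose v := invmx P *m e.
have Cv : Cm *m v = sp 0 k *: v.
  rewrite Cm_eq /v !mulmxA -[invmx P *m diag_mx sp *m P *m invmx P]mulmxA.
  rewrite mulmxV ?Punit // mulmx1.
  rewrite -mulmxA scalemxAr; congr (_ *m _).
  apply/matrixP => i j; rewrite mul_diag_mx !mxE ord1.
  by case: eqP => [->|_]; rewrite ?mulr1 ?mulr0 // eqxx.
exists (Dm *m v); split.
  apply/negP => /eqP H.
  have : P *m (Di *m (Dm *m v)) = e by rewrite mulmxA DiDm mul1mx /v mulmxA mulmxV ?Punit // mul1mx.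
  rewrite H mulmx0 mulmx0 => /matrixP /(_ k 0); rewrite !mxE !eqxx /=.
  by move/eqP; rewrite eq_sym oner_eq0.
rewrite sp_real [cmx M *m _]mulmxA MDm.
have -> : A *m (Dm *m v) = Di *m (Cm *m v).
  by rewrite /Cm !mulmxA DiDm mul1mx.
by rewrite Cv -scalemxAr.
Qed.


Lemma conjM_sq' (x : C) : conjc x * x = (csqnorm x)%:C%C.
Proof. case: x => a b; rewrite /csqnorm /=. congr Complex; ring. Qed.

Lemma csqnorm_ge0 (x : C) : 0 <= csqnorm x.
Proof. by rewrite /csqnorm addr_ge0 // sqr_ge0. Qed.

Lemma rayleigh (z : 'cV[C]_d) :
  lam0 * \sum_j M j j * csqnorm (z j 0) <= cinner z (A *m z).
Proof.
pose y := Di *m z; pose q := P *m y.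
have zE : z = Dm *m y by rewrite /y mulmxA DmDi mul1mx.
have E1 : cadj z *m (A *m z) = cadj q *m diag_mx sp *m q.
  rewrite zE cadj_mul DmC /q.
  rewrite [cadj (P *m y)]cadj_mul -invP.
  have -> : cadj y *m Dm *m (A *m (Dm *m y)) = cadj y *m Cm *m y by rewrite /Cm !mulmxA.
  by rewrite Cm_eq !mulmxA.
have E2 : \sum_j M j j * csqnorm (z j 0) = cinner q q.
  have -> : cinner q q = cinner y y.
    rewrite /cinner /q cadj_mul -invP -mulmxA [invmx P *m (P *m y)]mulmxA.
    by rewrite mulVmx ?Punit // mul1mx.
  rewrite cinnerE; apply: eq_bigr => j _; rewrite /y /Di mul_diag_mx !mxE -s2.
  by case: (z j 0) => a b; rewrite /csqnorm /=; ring.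
rewrite E2 cinnerE mulr_sumr /cinner E1 mul_mx_diag !mxE Re_sum.
apply: ler_sum => k _; rewrite !mxE -sp_real.
have h := sp_ge k; move: (complex.Re (sp 0 k)) h => r h.
case: (\sum_j P k j * y j 0) => a1 a2 /=.
have H : 0 <= (r - lam0) * (a1 ^+ 2 + a2 ^+ 2).
  by rewrite mulr_ge0 ?subr_ge0 // addr_ge0 // sqr_ge0.
nra.
Qed.

End Ray.

Unset Implicit Arguments. Set Strict Implicit.

Section Fin.
Variable R : realType.
Local Notation C := (R[i]).
Variable d : nat.

Lemma herm_sym (A : 'M[C]_d) (z w : 'cV[C]_d) : hermitian_mx_c A ->
  cinner (A *m w) z = cinner (A *m z) w.
Proof.
move=> hA; rewrite !cinnerE.
have Ae k l : A l k = conjc (A k l).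
  by rewrite -{1}hA /cadj !mxE.
under eq_bigr do rewrite !mxE rmorph_sum /= mulr_suml Re_sum.
under [RHS]eq_bigr do rewrite !mxE rmorph_sum /= mulr_suml Re_sum.
rewrite exchange_big /=; apply: eq_bigr => k _; apply: eq_bigr => l _.
rewrite Ae.
by case: (A k l) => a b; case: (w k 0) => c e; case: (z l 0) => f g /=; ring.
Qed.

Lemma collapse (g : 'I_d -> C) (c : C) j :
  \sum_k complex.Re (conjc (g k) * (c *: delta_mx j (0 : 'I_1)) k 0)
  = complex.Re (conjc (g j) * c).
Proof.
rewrite (bigD1 j) //= big1 ?addr0; first by rewrite !mxE !eqxx mulr1.
move=> k /negbTE kj; rewrite !mxE kj /= !mulr0.
by case: (g k) => a b /=.
Qed.

Lemma deriv_value (A : 'M[C]_d) (M : 'M[R]_d) lam z (c : C) j :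
  hermitian_mx_c A -> is_diag_mx M ->
  2^-1 * (cinner (A *m z) (c *: delta_mx j 0) + cinner (A *m (c *: delta_mx j 0)) z)
  + lam / 4 * \sum_k M k k * (2 * (1 - csqnorm (z k 0)) * (- bb z (c *: delta_mx j 0) k))
  = complex.Re (conjc ((A *m z) j 0 - (lam * M j j * (1 - csqnorm (z j 0)))%:C%C * z j 0) * c).
Proof.
move=> hA dM; rewrite [cinner (A *m (c *: _)) z]herm_sym //.
have -> : \sum_k M k k * (2 * (1 - csqnorm (z k 0)) * (- bb z (c *: delta_mx j 0) k))
   = - 4 * \sum_k complex.Re (conjc ((M k k * (1 - csqnorm (z k 0)))%:C%C * z k 0)
          * (c *: delta_mx j (0 : 'I_1)) k 0).
  rewrite mulr_sumr; apply: eq_bigr => k _; rewrite /bb.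
  move: ((c *: delta_mx j (0 : 'I_1)) k 0) => w.
  by case: (z k 0) => a b; case: w => e f /=; ring.
rewrite (collapse (fun k => (M k k * (1 - csqnorm (z k 0)))%:C%C * z k 0)).
rewrite cinnerE (collapse (fun k => (A *m z) k 0)).
set x := (A *m z) j 0.
by case: x => a b; case: (z j 0) => e f; case: c => g h /=; field.
Qed.

End Fin.

Lemma line_eq (R : realType) (d : nat) (A : 'M[R[i]]_d) (M : 'M[R]_d) lam (z : 'cV[R[i]]_d) j :
  (fun t : R^o => (energy A M lam (z + (Complex 0 t) *: delta_mx j 0) : R^o))
  = (fun t : R^o => (energy A M lam (z + (Complex t 0) *: ('i%C *: delta_mx j 0)) : R^o)).
Proof.
apply/funext => t; rewrite scalerA.
have -> : (Complex t 0 * 'i%C : R[i]) = Complex 0 t.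
  by apply/eqP; rewrite eq_complex /= !mulr0 !mul0r mulr1 subr0 addr0 !eqxx.
by [].
Qed.

Lemma line_eq1 (R : realType) (d : nat) (A : 'M[R[i]]_d) (M : 'M[R]_d) lam (z : 'cV[R[i]]_d) j :
  (fun t : R^o => (energy A M lam (z + (Complex t 0) *: delta_mx j 0) : R^o))
  = (fun t : R^o => (energy A M lam (z + (Complex t 0) *: (1 *: delta_mx j 0)) : R^o)).
Proof. by rewrite scale1r. Qed.


Theorem lemmaC1 (R : realType) (d : nat) (A : 'M[R[i]]_d) (M : 'M[R]_d)
    (lam0 lam : R) :
  hermitian_mx_c A -> posdef_c A ->
  is_diag_mx M -> (forall i : 'I_d, 0 < M i i) ->
  0 < lam0 ->
  gen_eigenvalue A M (lam0%:C)%C ->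
  (forall mu : R, gen_eigenvalue A M (mu%:C)%C -> lam0 <= mu) ->
  0 < lam -> lam <= lam0 ->
  critical_point (energy A M lam) 0 /\
  (forall z : 'cV[R[i]]_d, critical_point (energy A M lam) z -> z = 0).
Proof.
move=> hA _ dM Mpos _ _ hmin lam_gt0 lam_le.
have DV (z : 'cV[R[i]]_d) (c : R[i]) j :
    is_derive (0 : R^o) (1 : R^o)
      (fun t : R^o => (energy A M lam (z + (Complex t 0) *: (c *: delta_mx j 0)) : R^o))
      (complex.Re (conjc ((A *m z) j 0 - (lam * M j j * (1 - csqnorm (z j 0)))%:C%C * z j 0) * c)).
  by rewrite -deriv_value //; apply: energy_derive.
have zero_val c j : complex.Re (conjc ((A *m (0 : 'cV[R[i]]_d)) j 0
     - (lam * M j j * (1 - csqnorm ((0 : 'cV[R[i]]_d) j 0)))%:C%C * (0 : 'cV[R[i]]_d) j 0) * c) = 0.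
  rewrite mulmx0 mxE.
  by rewrite mulr0 subr0 /= oppr0 mul0r.
split.
  move=> j; split.
    by rewrite line_eq1; apply: is_derive_eq (DV 0 1 j) _.
  by rewrite line_eq; apply: is_derive_eq (DV 0 _ j) _.
move=> z cz.
have gz j : (A *m z) j 0 = (lam * M j j * (1 - csqnorm (z j 0)))%:C%C * z j 0.
  have [h1 h2] := cz j.
  rewrite line_eq1 in h1; rewrite line_eq in h2.
  have e1 := @derive_val _ _ _ _ _ _ _ h1.
  have e2 := @derive_val _ _ _ _ _ _ _ h2.
  rewrite (@derive_val _ _ _ _ _ _ _ (DV z 1 j)) in e1.
  rewrite (@derive_val _ _ _ _ _ _ _ (DV z _ j)) in e2.
  apply/eqP; rewrite -subr_eq0; apply/eqP.
  move: e1 e2; case: ((A *m z) j 0 - _) => a b /= e1 e2.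
  apply/eqP; rewrite eq_complex /=; apply/andP; split; apply/eqP.
    by move: e1; rewrite !mulr0 !mulr1 => ?; lra.
  by move: e2; rewrite !mulr0 !mulr1 => ?; lra.
have ray := rayleigh hA dM Mpos hmin z.
have E : cinner z (A *m z) = lam * \sum_j M j j * csqnorm (z j 0) - lam * \sum_j M j j * (csqnorm (z j 0) * csqnorm (z j 0)).
  rewrite cinnerE !mulr_sumr -sumrB; apply: eq_bigr => j _.
  rewrite gz; case: (z j 0) => a b; rewrite /csqnorm /=; ring.
rewrite E in ray.
have S2 : 0 <= \sum_j M j j * csqnorm (z j 0).
  by apply: sumr_ge0 => j _; rewrite mulr_ge0 ?csqnorm_ge0 // ltW.
have S4 : \sum_j M j j * (csqnorm (z j 0) * csqnorm (z j 0)) <= 0 by nra.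
have S4' : \sum_j M j j * (csqnorm (z j 0) * csqnorm (z j 0)) = 0.
  apply/eqP; rewrite eq_le S4 /=.
  by apply: sumr_ge0 => j _; rewrite mulr_ge0 ?mulr_ge0 ?csqnorm_ge0 // ltW.
have /psumr_eq0P H := S4'.
apply/matrixP => j k; rewrite ord1 mxE.
have /eqP := H (fun i _ => mulr_ge0 (ltW (Mpos i)) (mulr_ge0 (csqnorm_ge0 _) (csqnorm_ge0 _))) j isT.
rewrite mulf_eq0 (gt_eqF (Mpos j)) /= mulf_eq0 orbb /csqnorm.
case: (z j 0) => a b /= h.
have ha : a = 0 by nra.
have hb : b = 0 by nra.
by rewrite ha hb.
Qed.
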